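(* Let $A$ be an associative (not necessarily unital) algebra over a field satisfying the identity $x_1\cdots x_n=x_{\sigma(1)}\cdots x_{\sigma(n)}$ for some $\sigma\in S_n$, and write $i=\sigma(1)$, $j=\sigma(n)$, where $i\ne 1$ and $j\ne n$. Then $H_{n+1}$ contains the cycles $(1\,2\,\ldots\,i)$ and $(j+1\,\ldots\,n+1)$, and $H_{n+2}$ contains the transpositions $(1\,2)$ and $(n+1\,\,n+2)$.
   Context: For each $k$, $H_k\subseteq S_k$ is the set of permutations $\tau$ such that $A$ satisfies $x_1\cdots x_k=x_{\tau(1)}\cdots x_{\tau(k)}$ (i.e. $a_1\cdots a_k=a_{\tau(1)}\cdots a_{\tau(k)}$ for all $a_1,\dots,a_k\in A$). *)

(* Defs.v *)
From HB Require Import structures.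
From mathcomp Require Import all_boot all_order all_algebra all_fingroup.
Set Implicit Arguments. Unset Strict Implicit. Unset Printing Implicit Defensive.
Import GRing.Theory.
Local Open Scope ring_scope.

(* Product of a word x_1 ... x_k in a (non-unital) multiplication [mul],
   bracketed to the left ((x_1 x_2) x_3)...; the empty word is never used
   for k >= 1 (we return 0 there, irrelevant). *)
Definition wprod {A : Type} (mul : A -> A -> A) (z : A) (s : seq A) : A :=
  match s with [::] => z | x :: s' => foldl mul x s' end.

(* tau \in H_k : the algebra satisfies x_1...x_k = x_{tau(1)}...x_{tau(k)}.
   Indices are 0-based ('I_k = {0,...,k-1}). *)
Definition in_H {K : fieldType} {A : lmodType K} (mul : A -> A -> A)
    (k : nat) (tau : 'S_k) : Prop :=
  forall a : 'I_k -> A,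
    wprod mul 0 [seq a i | i <- enum 'I_k] =
    wprod mul 0 [seq a (tau i) | i <- enum 'I_k].

Definition is_cycle_range (N : nat) (tau : 'S_N) (a b : nat) : Prop :=
  forall k : 'I_N,
    val (tau k) = if (a <= val k < b)%N then (val k).+1
                  else if val k == b then a else val k.

(* Main.v *)
Require Import Defs.
From HB Require Import structures.
From mathcomp Require Import all_boot all_order all_algebra all_fingroup.
From mathcomp Require Import zify.
Import GRing.Theory.

Lemma foldl_mulA {A : Type} (mul : A -> A -> A)
  (mulA : forall x y z, mul x (mul y z) = mul (mul x y) z) x u s :
  foldl mul (mul x u) s = mul x (foldl mul u s).
Proof. by elim: s x u => //= v s IH x u; rewrite -mulA IH. Qed.

Lemma wprod_split {A : Type} (mul : A -> A -> A)
  (mulA : forall x y z, mul x (mul y z) = mul (mul x y) z) z s x y R :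
  wprod mul z (s ++ mul x y :: R) = wprod mul z (s ++ x :: y :: R).
Proof. by case: s => [|u s] //=; rewrite !foldl_cat /= mulA. Qed.

Lemma wprod_rcons {A : Type} (mul : A -> A -> A) z s x :
  (0 < size s)%N -> wprod mul z (rcons s x) = mul (wprod mul z s) x.
Proof. by case: s => [|u s] //= _; rewrite foldl_rcons. Qed.

Lemma wprod_rcons_mul {A : Type} (mul : A -> A -> A)
  (mulA : forall x y z, mul x (mul y z) = mul (mul x y) z) z s u v :
  wprod mul z (rcons s (mul u v)) = mul (wprod mul z (rcons s u)) v.
Proof. by case: s => [|w s] //=; rewrite !foldl_rcons mulA. Qed.

Lemma map_enum_perm {A : Type} M (a : 'I_M.+1 -> A) (rho : 'S_M.+1) f
  (hf : forall k, val (rho k) = f (val k)) :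
  [seq a (rho k) | k <- enum 'I_M.+1] = [seq a (inord n) | n <- map f (iota 0 M.+1)].
Proof.
rewrite -val_enum_ord -!map_comp; apply: eq_map => k /=.
by rewrite -hf inord_val.
Qed.

Lemma map_enum_id {A : Type} M (a : 'I_M.+1 -> A) :
  [seq a k | k <- enum 'I_M.+1] = [seq a (inord n) | n <- iota 0 M.+1].
Proof.
rewrite -val_enum_ord -!map_comp; apply: eq_map => k /=.
by rewrite inord_val.
Qed.

Lemma map_succ_iota m n : map S (iota m n) = iota m.+1 n.
Proof. by elim: n m => //= n IH m; rewrite IH. Qed.

Lemma iota_split n b : b < n.+1 -> iota 0 n.+1 = iota 0 b ++ b :: iota b.+1 (n - b).
Proof.
move=> hb; rewrite {1}(_ : n.+1 = b + (n - b).+1); last by lia.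
by rewrite iotaD.
Qed.

Lemma iota_split2 n b : b < n.+1 -> iota 0 n.+2 = iota 0 b ++ b :: b.+1 :: iota b.+2 (n - b).
Proof.
move=> hb; rewrite {1}(_ : n.+2 = b + (n - b).+2); last by lia.
by rewrite iotaD.
Qed.

Lemma in_H_inv (K : fieldType) (A : lmodType K) (mul : A -> A -> A) N (tau : 'S_N) :
  in_H mul tau -> in_H mul (tau^-1)%g.
Proof.
move=> h a; have := h (fun i => a ((tau^-1)%g i)) => /= ->.
by apply: congr1; apply: eq_map => k; rewrite permK.
Qed.

Definition fL (b k : nat) : nat := if (0 <= k < b) then k.+1 else if k == b then 0 else k.
Definition fR (N j k : nat) : nat := if k <= j then k else if k == j.+1 then N else k.-1.

Lemma fL_lt b k : k < b -> fL b k = k.+1.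
Proof. by move=> h; rewrite /fL h. Qed.
Lemma fL_eq b : fL b b = 0.
Proof. by rewrite /fL ltnn eqxx. Qed.
Lemma fL_gt b k : b < k -> fL b k = k.
Proof. move=> h; rewrite /fL ltnNge (ltnW h) /= gtn_eqF //. Qed.

Lemma lemL (K : fieldType) (A : lmodType K) (mul : A -> A -> A)
  (mulA : forall x y z, mul x (mul y z) = mul (mul x y) z)
  n (tau : 'S_n.+1) (h : in_H mul tau) (rho : 'S_n.+2)
  (hr : forall k : 'I_n.+2, val (rho k) = fL (val (tau ord0)) (val k)) :
  in_H mul rho.
Proof.
move=> a; set b := val (tau ord0).
have hb : b < n.+1 by apply: ltn_ord.
pose a' k := a (inord k).
pose y := fun k : 'I_n.+1 => if val k == b then mul (a' 0) (a' (val k).+1) else a' (val k).+1.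
pose y0 := fun k : 'I_n.+1 => a' (val k).+1.
have H1 := h y. have H0 := h y0.
have E0 : [seq y0 k | k <- enum 'I_n.+1] = map a' (iota 1 n.+1).
  by rewrite -map_succ_iota -val_enum_ord -!map_comp.
rewrite (@map_enum_perm _ _ a _ _ hr) map_enum_id.
have -> : [seq a (inord k) | k <- iota 0 n.+2] = a' 0 :: map a' (iota 1 n.+1) by [].
have -> : wprod mul 0%R (a' 0 :: map a' (iota 1 n.+1)) = mul (a' 0) (wprod mul 0%R [seq y0 k | k <- enum 'I_n.+1]).
  by rewrite E0 /= (@foldl_mulA _ _ mulA).
rewrite H0.
have -> : mul (a' 0) (wprod mul 0%R [seq y0 (tau k) | k <- enum 'I_n.+1]) = wprod mul 0%R [seq y (tau k) | k <- enum 'I_n.+1].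
  rewrite enum_ordSl /= -(@foldl_mulA _ _ mulA) /y /b /=. rewrite ifT; last by apply/eqP. rewrite -!map_comp; congr (foldl _ _ _).
  apply: eq_map => k /=; rewrite ifN_eq //.
  apply/negP => /eqP /val_inj /perm_inj /eqP; by rewrite eq_sym (negbTE (neq_lift _ _)).
rewrite -H1 map_enum_id.
have Ly : [seq y (inord k) | k <- iota 0 n.+1] = map a' (iota 1 b) ++ mul (a' 0) (a' b.+1) :: map a' (iota b.+2 (n - b)).
  rewrite (@iota_split _ _ hb) map_cat /= -!map_succ_iota -!map_comp. congr (_ ++ _ :: _).
  - apply/eq_in_map => k; rewrite mem_iota => hk /=.
    rewrite /y /= inordK; last by lia.
    by have -> : (k == b) = false by lia.
  - by rewrite /y /= inordK ?eqxx.
  - apply/eq_in_map => k; rewrite mem_iota => hk /=.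
    rewrite /y /= inordK; last by lia.
    by have -> : (k.+1 == b) = false by lia.
have Lf : map (fL b) (iota 0 n.+2) = iota 1 b ++ 0 :: b.+1 :: iota b.+2 (n - b).
  rewrite (@iota_split2 _ _ hb) map_cat /=; congr (_ ++ _ :: _ :: _).
  - rewrite -map_succ_iota; apply/eq_in_map => k; rewrite mem_iota => hk /=.
    by rewrite fL_lt //; lia.
  - exact: fL_eq.
  - by rewrite fL_gt.
  - rewrite -[RHS]map_id; apply/eq_in_map => k; rewrite mem_iota => hk /=.
    by rewrite fL_gt //; lia.
rewrite Ly Lf map_cat /= (@wprod_split _ _ mulA).
rewrite -map_succ_iota -map_comp; congr (wprod _ _ (_ ++ _)).
Qed.

Lemma fR_le N j k : k <= j -> fR N j k = k.
Proof. by move=> h; rewrite /fR h. Qed.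
Lemma fR_eq N j : fR N j j.+1 = N.
Proof. by rewrite /fR ltnn eqxx. Qed.
Lemma fR_gt N j k : j.+1 < k -> fR N j k = k.-1.
Proof. by move=> h; rewrite /fR; (repeat case: ifP => //); lia. Qed.

Lemma lemR (K : fieldType) (A : lmodType K) (mul : A -> A -> A)
  (mulA : forall x y z, mul x (mul y z) = mul (mul x y) z)
  n (tau : 'S_n.+1) (h : in_H mul tau) (rho : 'S_n.+2)
  (hr : forall k : 'I_n.+2, val (rho k) = fR n.+1 (val (tau ord_max)) (val k)) :
  in_H mul rho.
Proof.
move=> a; set j := val (tau ord_max).
have hj : j < n.+1 by apply: ltn_ord.
pose a' k := a (inord k).
pose y := fun k : 'I_n.+1 => if val k == j then mul (a' j) (a' n.+1) else a' (val k).
pose y0 := fun k : 'I_n.+1 => a' (val k).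
have H1 := h y. have H0 := h y0.
have E0 : [seq y0 k | k <- enum 'I_n.+1] = map a' (iota 0 n.+1).
  by rewrite -val_enum_ord -!map_comp.
rewrite (@map_enum_perm _ _ a _ _ hr) map_enum_id.
have IS : iota 0 n.+2 = rcons (iota 0 n.+1) n.+1 by rewrite -cats1 -addn1 iotaD.
have -> : [seq a (inord k) | k <- iota 0 n.+2] = rcons (map a' (iota 0 n.+1)) (a' n.+1).
  by rewrite IS map_rcons.
have -> : wprod mul 0%R (rcons (map a' (iota 0 n.+1)) (a' n.+1)) = mul (wprod mul 0%R [seq y0 k | k <- enum 'I_n.+1]) (a' n.+1).
  by rewrite E0 wprod_rcons // size_map size_iota.
rewrite H0.
have Yj : y (tau ord_max) = mul (a' j) (a' n.+1).
  by rewrite /y /=; rewrite ifT //; apply/eqP.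
have -> : mul (wprod mul 0%R [seq y0 (tau k) | k <- enum 'I_n.+1]) (a' n.+1) = wprod mul 0%R [seq y (tau k) | k <- enum 'I_n.+1].
  rewrite !enum_ordSr !map_rcons Yj (@wprod_rcons_mul _ _ mulA) -!map_comp.
  congr (mul (wprod _ _ (rcons _ _)) _).
  apply: eq_map => k /=; rewrite /y /= ifN_eq //.
  apply/negP => /eqP /val_inj /perm_inj /(congr1 val) /=; move: (ltn_ord k); lia.
rewrite -H1 map_enum_id.
have Ly : [seq y (inord k) | k <- iota 0 n.+1] = map a' (iota 0 j) ++ mul (a' j) (a' n.+1) :: map a' (iota j.+1 (n - j)).
  rewrite (@iota_split _ _ hj) map_cat /=; congr (_ ++ _ :: _).
  - apply/eq_in_map => k; rewrite mem_iota => hk /=.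
    rewrite /y /= inordK; last by lia.
    by have -> : (k == j) = false by lia.
  - by rewrite /y /= inordK // ifT //; apply/eqP.
  - apply/eq_in_map => k; rewrite mem_iota => hk /=.
    rewrite /y /= inordK; last by lia.
    by have -> : (k == j) = false by lia.
have Lf : map (fR n.+1 j) (iota 0 n.+2) = iota 0 j ++ j :: n.+1 :: iota j.+1 (n - j).
  rewrite (@iota_split2 _ _ hj) map_cat /=; congr (_ ++ _ :: _ :: _).
  - rewrite -[RHS]map_id; apply/eq_in_map => k; rewrite mem_iota => hk /=.
    by rewrite fR_le //; lia.
  - by rewrite fR_le.
  - exact: fR_eq.
  - rewrite -[in LHS]map_succ_iota -map_comp -[RHS]map_id.
    apply/eq_in_map => k; rewrite mem_iota => hk /=.
    by rewrite fR_gt //; lia.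
rewrite Ly Lf map_cat /= (@wprod_split _ _ mulA).
by rewrite ?map_cat.
Qed.

Lemma mkperm M (f : nat -> nat) (hf : forall k, k < M -> f k < M)
  (hi : forall x y, x < M -> y < M -> f x = f y -> x = y) :
  exists rho : 'S_M, forall k, val (rho k) = f (val k).
Proof.
have inj : injective (fun k : 'I_M => Ordinal (hf _ (ltn_ord k))).
  move=> x y /(congr1 val) /= /hi H; apply: val_inj; apply: H; exact: ltn_ord.
by exists (perm inj) => k; rewrite permE.
Qed.

Lemma main_aux (K : fieldType) (A : lmodType K) (mul : A -> A -> A)
    (mulA : forall x y z, mul x (mul y z) = mul (mul x y) z)
    (m : nat) (sigma : 'S_m.+1)
    (hid : in_H mul sigma)
    (hi : val (sigma ord0) != 0%N)
    (hj : val (sigma ord_max) != m) :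
  (exists tau : 'S_m.+2,
      is_cycle_range tau 0 (val (sigma ord0)) /\ in_H mul tau) /\
  (exists tau : 'S_m.+2,
      is_cycle_range tau (val (sigma ord_max)).+1 m.+1 /\ in_H mul tau) /\
  in_H mul (tperm (ord0 : 'I_m.+3) (inord 1)) /\
  in_H mul (tperm (inord m.+1 : 'I_m.+3) ord_max).
Proof.
set b := val (sigma ord0). set j := val (sigma ord_max).
have hb : b < m.+1 by apply: ltn_ord.
have hj' : j < m.+1 by apply: ltn_ord.
have b0 : 0 < b by lia.
have jm : j < m by lia.
have [t1 ht1] : exists t1 : 'S_m.+2, forall k, val (t1 k) = fL b (val k).
  apply: mkperm.
  - by move=> k hk; rewrite /fL; (repeat case: ifP => //); lia.
  - by move=> x y hx hy; rewrite /fL; (repeat case: ifP => //); lia.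
have in1 : in_H mul t1 by apply: (@lemL _ _ _ mulA _ _ hid) => k; rewrite ht1.
pose g k := if (j.+1 <= k < m.+1) then k.+1 else if k == m.+1 then j.+1 else k.
have [t2 ht2] : exists t2 : 'S_m.+2, forall k, val (t2 k) = g (val k).
  apply: mkperm.
  - by move=> k hk; rewrite /g; (repeat case: ifP => //); lia.
  - by move=> x y hx hy; rewrite /g; (repeat case: ifP => //); lia.
have hr2 : forall k : 'I_m.+2, val ((t2^-1)%g k) = fR m.+1 j (val k).
  move=> k.
  have hk : fR m.+1 j k < m.+2 by move: (ltn_ord k); rewrite /fR; (repeat case: ifP => //); lia.
  have e : t2 (Ordinal hk) = k.
    apply: val_inj; rewrite /= ht2 /= /g /fR; move: (ltn_ord k).
    by (repeat case: ifP => //); lia.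
  by rewrite -[in LHS]e permK.
have in2' : in_H mul (t2^-1)%g by apply: (@lemR _ _ _ mulA _ _ hid).
have in2 : in_H mul t2 by rewrite -[t2]invgK; apply: in_H_inv.
split; first by exists t1; split => // k; rewrite ht1.
split; first by exists t2; split => // k; rewrite ht2.
have t10 : val (t1 ord0) = 1 by rewrite ht1 fL_lt.
have t2m : val ((t2^-1)%g ord_max) = m by rewrite hr2 fR_gt.
split.
- apply: (@lemL _ _ _ mulA _ _ in1) => k; rewrite t10.
  case: tpermP => [->|->|].
  + by rewrite /= inordK.
  + by rewrite /= inordK.
  + move=> n0 n1; rewrite fL_gt //.
    have : val k != 0 by apply/eqP => h0; apply: n0; apply: val_inj.
    have : val k != 1 by apply/eqP => h0; apply: n1; apply: val_inj; rewrite /= inordK.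
    lia.
- apply: (@lemR _ _ _ mulA _ _ in2') => k; rewrite t2m.
  case: tpermP => [->|->|].
  + by rewrite /= inordK // fR_eq.
  + by rewrite /= inordK // fR_gt.
  + move=> n0 n1; rewrite fR_le //; rewrite /=.
    have : nat_of_ord k != m.+1 by apply/eqP => h0; apply: n0; apply: val_inj; rewrite /= inordK.
    have : nat_of_ord k != m.+2 by apply/eqP => h0; apply: n1; apply: val_inj.
    move: (ltn_ord k); lia.
Qed.

Local Open Scope ring_scope.

Theorem corollary2p9 (K : fieldType) (A : lmodType K) (mul : A -> A -> A)
    (mulA : forall x y z, mul x (mul y z) = mul (mul x y) z)
    (mulDl : forall (c : K) x y z, mul (c *: x + y) z = c *: mul x z + mul y z)
    (mulDr : forall (c : K) x y z, mul z (c *: x + y) = c *: mul z x + mul z y)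
    (m : nat) (sigma : 'S_m.+1)
    (hid : in_H mul sigma)
    (hi : val (sigma ord0) != 0%N)
    (hj : val (sigma ord_max) != m) :
  (exists tau : 'S_m.+2,
      is_cycle_range tau 0 (val (sigma ord0)) /\ in_H mul tau) /\
  (exists tau : 'S_m.+2,
      is_cycle_range tau (val (sigma ord_max)).+1 m.+1 /\ in_H mul tau) /\
  in_H mul (tperm (ord0 : 'I_m.+3) (inord 1)) /\
  in_H mul (tperm (inord m.+1 : 'I_m.+3) ord_max).
Proof. exact: (@main_aux K A mul mulA m sigma hid hi hj). Qed.
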